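(* Let $e>0$, $\beta>0$, $v>0$ and a sign $s\in\{+1,-1\}$. Define the winding-gauge configuration $\phi_w(\tau)=2v\,t_1\exp\!\big(s\tfrac{4\pi i}{\beta}t_3\tau\big)$ and $a^{w}_\mu=-s\,\delta_{\mu4}\frac{2\pi}{e\beta}t_3$, and the unitary-gauge configuration $\phi_u=2v\,t_3$, $a^u_\mu=0$. Then there exists a map $\tilde\Omega:[0,\beta]\to\mathrm{SU}(2)$, depending only on $\tau$, which is smooth except at a single point where it is discontinuous (singular), with $\tilde\Omega(0)=\tilde\Omega(\beta)$ (periodic), such that: (i) $\tilde\Omega(\tau)\phi_w(\tau)\tilde\Omega(\tau)^\dagger=\phi_u$ for all $\tau$; (ii) $\tilde\Omega a^w_\mu\tilde\Omega^\dagger+\frac ie\tilde\Omega\partial_\mu\tilde\Omega^\dagger=a^u_\mu$ at all $\tau$ away from the discontinuity; (iii) (admissibility) for every continuous $\mathfrak{su}(2)$-valued function $\delta a(\tau)$ on $[0,\beta]$ with $\delta a(0)=\delta a(\beta)$, the function $\tilde\Omega\,\delta a\,\tilde\Omega^\dagger$ is continuous on $[0,\beta]$ and takes equal values at $0$ and $\beta$. Under this gauge transformation the Polyakov loop changes from $P[a^w]=-\mathbb 1_2$ to $P[a^u]=\mathbb 1_2$.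
   Context: Gauge group SU(2), $t_a=\frac12\sigma_a$ (Pauli matrices). A gauge transformation by $\Omega$ acts as $\phi\to\Omega\phi\Omega^\dagger$, $a_\mu\to\Omega a_\mu\Omega^\dagger+\frac ie\Omega\partial_\mu\Omega^\dagger$, with $\partial_4=\partial_\tau$. For a $\tau$-independent temporal component $a_4$ proportional to $t_3$, the Polyakov loop is $P[a]=\exp\big(ie\int_0^\beta d\tau\,a_4\big)$ (no path ordering needed). *)

(* Defs.v *)
From HB Require Import structures.
From mathcomp Require Import all_boot all_order all_algebra.
From mathcomp Require Import complex.
From mathcomp Require Import all_classical all_reals all_analysis.
Set Implicit Arguments. Unset Strict Implicit. Unset Printing Implicit Defensive.
Import Order.TTheory GRing.Theory Num.Theory numFieldNormedType.Exports.
Local Open Scope ring_scope.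
Local Open Scope classical_set_scope.
Local Open Scope complex_scope.

Section Defs.
Variable R : realType.
Local Notation C := R[i].
Local Notation M2 := 'M[R[i]]_2.

Definition dag (A : M2) : M2 := (map_mx conjc A)^T.

Definition sigma1 : M2 := \matrix_(i < 2, j < 2) (if i != j then 1 else 0).
Definition sigma2 : M2 :=
  \matrix_(i < 2, j < 2)
    (if i == j then 0 else if i == ord0 then - 'i else 'i).
Definition sigma3 : M2 :=
  \matrix_(i < 2, j < 2)
    (if i == j then (if i == ord0 then 1 else -1) else 0).
Definition t1 : M2 := (2%:R)^-1 *: sigma1.
Definition t2 : M2 := (2%:R)^-1 *: sigma2.
Definition t3 : M2 := (2%:R)^-1 *: sigma3.

Definition is_SU2 (U : M2) : Prop := U *m dag U = 1%:M /\ \det U = 1.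

(* su(2) in the physics convention with hermitian generators t_a:
   hermitian traceless matrices (a = a^a t_a with real a^a). *)
Definition is_su2 (A : M2) : Prop := dag A = A /\ \tr A = 0.

Definition expm_partial (A : M2) (n : nat) : M2 :=
  \sum_(k < n) ((k`!)%:R^-1 : C) *: A ^+ k.
Definition expm (A : M2) : M2 :=
  \matrix_(i < 2, j < 2)
    ((limn (fun n => complex.Re (expm_partial A n i j))) +i*
     (limn (fun n => complex.Im (expm_partial A n i j)))).

Definition mx_deriv (f : R -> M2) : R -> M2 := fun t =>
  \matrix_(i < 2, j < 2)
    ((derive1 (fun s => complex.Re (f s i j)) t) +i* (derive1 (fun s => complex.Im (f s i j)) t)).

(* Euclidean time direction mu = 4 among the four indices 'I_4
   (mu = 1,2,3,4 is represented by 0,1,2,3). *)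
Definition mu4 : 'I_4 := ord_max.

(* Partial derivative d_mu of a configuration depending only on tau. *)
Definition dmu (mu : 'I_4) (f : R -> M2) : R -> M2 :=
  if mu == mu4 then mx_deriv f else fun _ => 0.

Definition mx_cont_within (D : set R) (f : R -> M2) (x : R) : Prop :=
  forall i j : 'I_2,
    (fun s => complex.Re (f s i j)) @ within D (nbhs x) --> complex.Re (f x i j) /\
    (fun s => complex.Im (f s i j)) @ within D (nbhs x) --> complex.Im (f x i j).

Definition mx_cont_on (D : set R) (f : R -> M2) : Prop :=
  forall x, D x -> mx_cont_within D f x.

Definition smooth_on (S : set R) (f : R -> M2) : Prop :=
  exists (g : R -> M2) (U : set R),
    open U /\ S `<=` U /\
    (forall (i j : 'I_2) (n : nat) (x : R), U x ->
        derivable (derive1n n (fun s => complex.Re (g s i j))) x 1 /\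
        derivable (derive1n n (fun s => complex.Im (g s i j))) x 1) /\
    (forall x, S x -> g x = f x).

Definition gauge_transform (e : R) (Om : R -> M2) (mu : 'I_4) (a : M2) (t : R)
  : M2 :=
  Om t *m a *m dag (Om t)
  + ('i / e%:C) *: (Om t *m dmu mu (fun s => dag (Om s)) t).

Definition admissible (beta : R) (Om : R -> M2) : Prop :=
  forall da : R -> M2,
    (forall t, 0 <= t <= beta -> is_su2 (da t)) ->
    mx_cont_on `[0, beta] da ->
    da 0 = da beta ->
    mx_cont_on `[0, beta] (fun t => Om t *m da t *m dag (Om t)) /\
    Om 0 *m da 0 *m dag (Om 0) = Om beta *m da beta *m dag (Om beta).

(* Polyakov loop of a tau-independent temporal component a_4:
   P[a] = exp(i e int_0^beta a_4 dtau) = exp(i e beta a_4). *)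
Definition polyakov_const (e beta : R) (a4 : M2) : M2 :=
  expm (('i * (e * beta)%:C) *: a4).

Definition phi_w (v beta s : R) (t : R) : M2 :=
  (2 * v)%:C *: (t1 *m expm (((s * (4 * pi) / beta * t)%:C * 'i) *: t3)).
Definition a_w (e beta s : R) (mu : 'I_4) : M2 :=
  if mu == mu4 then (- s * (2 * pi) / (e * beta))%:C *: t3 else 0.

Definition phi_u (v : R) : M2 := (2 * v)%:C *: t3.
Definition a_u (mu : 'I_4) : M2 := 0.

End Defs.

(* Main.v *)
Require Import Defs.
From HB Require Import structures.
From mathcomp Require Import all_boot all_order all_algebra.
From mathcomp Require Import complex.
From mathcomp Require Import all_classical all_reals all_analysis.
From mathcomp Require Import ring lra.
Import Order.TTheory GRing.Theory Num.Theory numFieldNormedType.Exports.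
Set Implicit Arguments. Unset Strict Implicit. Unset Printing Implicit Defensive.
Local Open Scope ring_scope.
Local Open Scope classical_set_scope.
Local Open Scope complex_scope.
Section A.
Variable R : realType.
Local Notation C := R[i].
Definition T (p q m : R) := fun s : R => p * cos (m * s) + q * sin (m * s).

Lemma is_derive_T (p q m x : R) : is_derive x 1 (T p q m) (T (m * q) (- (m * p)) m x).
Proof.
rewrite /T.
have hc : is_derive x 1 (fun s => cos (m * s)) (- sin (m * x) * m).
  apply: (@is_derive1_comp R cos (fun s => m * s) x (- sin (m * x)) m).
  apply: is_derive_eq. by rewrite scaler1.
have hs : is_derive x 1 (fun s => sin (m * s)) (cos (m * x) * m).
  apply: (@is_derive1_comp R sin (fun s => m * s) x (cos (m * x)) m).
  apply: is_derive_eq. by rewrite scaler1.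
apply: is_derive_eq.
rewrite /GRing.scale /=. ring.
Qed.

Lemma derive1_T p q m : (T p q m)^`() = T (m * q) (- (m * p)) m.
Proof. apply/funext => x; rewrite derive1E; exact: (@derive_val _ _ _ _ _ _ _ (is_derive_T p q m x)). Qed.

Lemma derivable_T p q m x : derivable (T p q m) x 1.
Proof. exact: (@ex_derive _ _ _ _ _ _ _ (is_derive_T p q m x)). Qed.

Lemma derive1n_T n p q m : exists p' q', (T p q m)^`(n) = T p' q' m.
Proof.
elim: n => [|n [p' [q' IH]]].
  by exists p, q; rewrite derive1n0.
by exists (m * q'), (- (m * p')); rewrite derive1nS IH derive1_T.
Qed.

Lemma cont_T p q m x : (T p q m) @ x --> T p q m x.
Proof.
apply: differentiable_continuous. apply/derivable1_diffP. exact: derivable_T.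
Qed.

Definition mk2 (a b c d : C) : 'M[C]_2 :=
  \matrix_(i < 2, j < 2) if i == ord0 then (if j == ord0 then a else b)
                          else (if j == ord0 then c else d).
Lemma I2 (i : 'I_2) : i = ord0 \/ i = ord_max.
Proof. by case: i => [[|[|//]]] Hi; [left|right]; apply/val_inj. Qed.

Lemma mk2E (A : 'M[C]_2) : A = mk2 (A ord0 ord0) (A ord0 ord_max) (A ord_max ord0) (A ord_max ord_max).
Proof. by apply/matrixP => i j; rewrite mxE; case: (I2 i) => ->; case: (I2 j) => ->. Qed.

Lemma mulmx2 (A B : 'M[C]_2) i j : (A *m B) i j = A i ord0 * B ord0 j + A i ord_max * B ord_max j.
Proof.
rewrite mxE !big_ord_recl big_ord0 addr0. congr (_ * _ + _ * _); congr (_ _ _); exact/val_inj.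
Qed.

Lemma mk2_mul a b c d a' b' c' d' : mk2 a b c d *m mk2 a' b' c' d' =
  mk2 (a * a' + b * c') (a * b' + b * d') (c * a' + d * c') (c * b' + d * d').
Proof. by apply/matrixP => i j; rewrite mulmx2 !mxE; case: (I2 i) => ->; case: (I2 j) => ->. Qed.

Lemma mk2_add a b c d a' b' c' d' : mk2 a b c d + mk2 a' b' c' d' =
  mk2 (a + a') (b + b') (c + c') (d + d').
Proof. by apply/matrixP => i j; rewrite !mxE; case: (I2 i) => ->; case: (I2 j) => ->. Qed.

Lemma mk2_scale x a b c d : x *: mk2 a b c d = mk2 (x * a) (x * b) (x * c) (x * d).
Proof. by apply/matrixP => i j; rewrite !mxE; case: (I2 i) => ->; case: (I2 j) => ->. Qed.

Lemma dag_mk2 a b c d : dag (mk2 a b c d) = mk2 (conjc a) (conjc c) (conjc b) (conjc d).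
Proof. by apply/matrixP => i j; rewrite !mxE; case: (I2 i) => ->; case: (I2 j) => ->. Qed.

Lemma mk2_1 : (1%:M : 'M[C]_2) = mk2 1 0 0 1.
Proof. by apply/matrixP => i j; rewrite !mxE; case: (I2 i) => ->; case: (I2 j) => ->. Qed.

Lemma mk2_0 : (0 : 'M[C]_2) = mk2 0 0 0 0.
Proof. by apply/matrixP => i j; rewrite !mxE; case: (I2 i) => ->; case: (I2 j) => ->. Qed.

Lemma det_mk2 a b c d : \det (mk2 a b c d) = a * d - b * c.
Proof.
rewrite (expand_det_row _ ord0) !big_ord_recl big_ord0 addr0 /cofactor.
rewrite !det_mx11 !mxE /=. by rewrite expr0 expr1 !mul1r mulN1r mulrN. Qed.
Lemma sigma1E : sigma1 R = mk2 0 1 1 0.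
Proof. by apply/matrixP => i j; rewrite !mxE; case: (I2 i) => ->; case: (I2 j) => ->. Qed.
Lemma sigma3E : sigma3 R = mk2 1 0 0 (-1).
Proof. by apply/matrixP => i j; rewrite !mxE; case: (I2 i) => ->; case: (I2 j) => ->. Qed.
Lemma t1E : t1 R = mk2 0 (2%:R)^-1 (2%:R)^-1 0.
Proof. by rewrite /t1 sigma1E mk2_scale !mulr0 !mulr1. Qed.
Lemma t3E : t3 R = mk2 (2%:R)^-1 0 0 (- (2%:R)^-1).
Proof. by rewrite /t3 sigma3E mk2_scale !mulr0 !mulr1 mulrN1. Qed.

Definition ex (y : R) : C := cos y +i* sin y.
Lemma exD x y : ex (x + y) = ex x * ex y.
Proof. rewrite /ex; simpc. congr (_ +i* _); first exact: cosD. by rewrite sinD addrC. Qed.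
Lemma ex0 : ex 0 = 1.
Proof. by rewrite /ex cos0 sin0. Qed.
Lemma exNK y : ex y * ex (- y) = 1.
Proof. by rewrite -exD subrr ex0. Qed.
Lemma ex_neq0 y : ex y != 0.
Proof. apply/negP => /eqP H. have := exNK y. rewrite H mul0r => /eqP. by rewrite eq_sym oner_eq0. Qed.
Lemma exN y : ex (- y) = (ex y)^-1.
Proof. by apply: (mulfI (ex_neq0 y)); rewrite exNK divff // ex_neq0. Qed.
Lemma exJ y : (conjc (ex y)) = ex (- y).
Proof. by rewrite /ex; simpc; rewrite cosN sinN. Qed.
Lemma Re_ex (c : C) (m s : R) : complex.Re (c * ex (m * s)) = T (complex.Re c) (- complex.Im c) m s.
Proof. case: c => a b; rewrite /ex /T; simpc; rewrite /=; ring. Qed.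
Lemma Im_ex (c : C) (m s : R) : complex.Im (c * ex (m * s)) = T (complex.Im c) (complex.Re c) m s.
Proof. case: c => a b; rewrite /ex /T; simpc; rewrite /=; ring. Qed.
Lemma ReD (x y : C) : complex.Re (x + y) = complex.Re x + complex.Re y.
Proof. by case: x; case: y. Qed.
Lemma ImD (x y : C) : complex.Im (x + y) = complex.Im x + complex.Im y.
Proof. by case: x; case: y. Qed.
Lemma Re_sum n (F : 'I_n -> C) : complex.Re (\sum_(k < n) F k) = \sum_(k < n) complex.Re (F k).
Proof. elim: n F => [|n IH] F; first by rewrite !big_ord0. by rewrite !big_ord_recr ReD IH. Qed.
Lemma Im_sum n (F : 'I_n -> C) : complex.Im (\sum_(k < n) F k) = \sum_(k < n) complex.Im (F k).
Proof. elim: n F => [|n IH] F; first by rewrite !big_ord0. by rewrite !big_ord_recr ImD IH. Qed.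

Lemma iX k : ('i : C) ^+ k = ((~~ odd k)%:R * (-1) ^+ (k./2)) +i* ((odd k)%:R * (-1) ^+ (k.-1./2)).
Proof.
elim: k => [|k IH]; first by rewrite expr0 /= mul1r mul0r.
rewrite exprSr IH; simpc. rewrite /= negbK.
congr (_ +i* _).
case/boolP: (odd k) => ok; last by rewrite !mul0r oppr0.
have hk : k = (k./2).*2.+1 by rewrite -[k in LHS]odd_double_half ok.
rewrite !mul1r {1}hk /= half_double uphalf_half ok /= exprS mulN1r.
done.
Qed.

Lemma natC (n : nat) : (n%:R : C) = (n%:R : R)%:C.
Proof. by rewrite rmorph_nat. Qed.
Lemma invC (x : R) : ((x%:C)^-1 : C) = (x^-1)%:C.
Proof. by rewrite fmorphV. Qed.

Lemma Re_term (y : R) k : complex.Re (((k`!)%:R^-1 : C) * ('i * y%:C) ^+ k) = cos_coeff y k.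
Proof.
rewrite exprMn iX -rmorphXn natC invC -!complexr0; simpc. rewrite /cos_coeff /=. rewrite -exprnP. ring.
Qed.
Lemma Im_term (y : R) k : complex.Im (((k`!)%:R^-1 : C) * ('i * y%:C) ^+ k) = sin_coeff y k.
Proof.
rewrite exprMn iX -rmorphXn natC invC -!complexr0; simpc. rewrite /sin_coeff /=. ring.
Qed.

Lemma mk2_00 a b c d : mk2 a b c d ord0 ord0 = a. Proof. by rewrite mxE. Qed.
Lemma mk2_01 a b c d : mk2 a b c d ord0 ord_max = b. Proof. by rewrite mxE. Qed.
Lemma mk2_10 a b c d : mk2 a b c d ord_max ord0 = c. Proof. by rewrite mxE. Qed.
Lemma mk2_11 a b c d : mk2 a b c d ord_max ord_max = d. Proof. by rewrite mxE. Qed.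

Lemma mk2_mulr a b c d a' b' c' d' : mk2 a b c d * mk2 a' b' c' d' =
  mk2 (a * a' + b * c') (a * b' + b * d') (c * a' + d * c') (c * b' + d * d').
Proof. exact: mk2_mul. Qed.

Lemma mk2_diagX (z w : C) k : mk2 z 0 0 w ^+ k = mk2 (z ^+ k) 0 0 (w ^+ k).
Proof.
elim: k => [|k IH]; first by rewrite !expr0 -mk2_1.
by rewrite exprS IH mk2_mulr !mulr0 !mul0r !addr0 !add0r -!exprS.
Qed.

Lemma expm_partial_diag (z w : C) n : expm_partial (mk2 z 0 0 w) n =
  mk2 (\sum_(k < n) ((k`!)%:R^-1 * z ^+ k)) 0 0 (\sum_(k < n) ((k`!)%:R^-1 * w ^+ k)).
Proof.
rewrite /expm_partial.
elim: n => [|n IH]; first by rewrite !big_ord0 mk2_0.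
by rewrite !big_ord_recr /= IH mk2_diagX mk2_scale mk2_add !mulr0 !addr0.
Qed.

Lemma lim_exc (y : R) : limn (fun n => complex.Re (\sum_(k < n) ((k`!)%:R^-1 * ('i * y%:C) ^+ k))) = cos y
   /\ limn (fun n => complex.Im (\sum_(k < n) ((k`!)%:R^-1 * ('i * y%:C) ^+ k))) = sin y.
Proof.
split.
- have -> : (fun n => complex.Re (\sum_(k < n) ((k`!)%:R^-1 * ('i * y%:C) ^+ k))) = series (cos_coeff y).
    apply/funext => n. rewrite Re_sum /series /= big_mkord. apply: eq_bigr => k _. exact: Re_term.
  by rewrite cosE /= -cos_coeffE.
- have -> : (fun n => complex.Im (\sum_(k < n) ((k`!)%:R^-1 * ('i * y%:C) ^+ k))) = series (sin_coeff y).
    apply/funext => n. rewrite Im_sum /series /= big_mkord. apply: eq_bigr => k _. exact: Im_term.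
  by rewrite sinE /pseries /= -sin_coeffE.
Qed.

Lemma divC2 (x : R) : (x / 2)%:C = x%:C / 2 :> C.
Proof. by rewrite rmorphM fmorphV /= rmorph_nat. Qed.

Lemma oppC (x : R) : (- x)%:C = - x%:C :> C.
Proof. by rewrite -!complexr0; simpc. Qed.

Lemma expm_t3 (c : R) : expm ((c%:C * 'i) *: t3 R) = mk2 (ex (c / 2)) 0 0 (ex (- (c / 2))).
Proof.
have hA : (c%:C * 'i) *: t3 R = mk2 ('i * (c / 2)%:C) 0 0 ('i * (- (c / 2))%:C).
  rewrite t3E mk2_scale !mulr0 oppC divC2. by congr mk2; field.
rewrite /expm hA.
apply/matrixP => i j; rewrite !mxE.
set A := mk2 _ _ _ _.
have -> : (fun n => complex.Re (expm_partial A n i j)) =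
  (fun n => complex.Re ((mk2 (\sum_(k < n) ((k`!)%:R^-1 * ('i * (c / 2)%:C) ^+ k)) 0 0
     (\sum_(k < n) ((k`!)%:R^-1 * ('i * (- (c / 2))%:C) ^+ k))) i j)).
  by apply/funext => n; rewrite expm_partial_diag.
have -> : (fun n => complex.Im (expm_partial A n i j)) =
  (fun n => complex.Im ((mk2 (\sum_(k < n) ((k`!)%:R^-1 * ('i * (c / 2)%:C) ^+ k)) 0 0
     (\sum_(k < n) ((k`!)%:R^-1 * ('i * (- (c / 2))%:C) ^+ k))) i j)).
  by apply/funext => n; rewrite expm_partial_diag.
case: (I2 i) => ->; case: (I2 j) => ->; rewrite /=.
- under eq_fun => n do rewrite mk2_00. under [X in _ +i* limn X]eq_fun => n do rewrite mk2_00.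
  by case: (lim_exc (c / 2)) => -> ->.
- under eq_fun => n do rewrite mk2_01. under [X in _ +i* limn X]eq_fun => n do rewrite mk2_01.
  by rewrite lim_cst.
- under eq_fun => n do rewrite mk2_10. under [X in _ +i* limn X]eq_fun => n do rewrite mk2_10.
  by rewrite lim_cst.
- under eq_fun => n do rewrite mk2_11. under [X in _ +i* limn X]eq_fun => n do rewrite mk2_11.
  by case: (lim_exc (- (c / 2))) => -> ->.
Qed.
Definition w0 : C := 2^-1 +i* 2^-1.
Definition Wm : 'M[C]_2 := mk2 w0 w0 (- (conjc w0)) ((conjc w0)).
Definition Em (y : R) : 'M[C]_2 := mk2 (ex y) 0 0 (ex (- y)).

Lemma halfC : ((2%:R)^-1 : C) = 2^-1 +i* 0.
Proof. by rewrite natC invC. Qed.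

Lemma dag_mul (A B : 'M[C]_2) : dag (A *m B) = dag B *m dag A.
Proof. by rewrite /dag map_mxM trmx_mul. Qed.
Lemma dagN (A : 'M[C]_2) : dag (- A) = - dag A.
Proof. by apply/matrixP => i j; rewrite !mxE rmorphN. Qed.

Lemma Wm_unit : Wm *m dag Wm = 1%:M.
Proof.
rewrite /Wm dag_mk2 mk2_mul mk2_1 /w0; congr mk2; simpc; apply/eqP; rewrite eq_complex /=;
  apply/andP; split; apply/eqP; by field.
Qed.
Lemma Wm_det : \det Wm = 1.
Proof. rewrite /Wm det_mk2 /w0; simpc; apply/eqP; rewrite eq_complex /=;
  apply/andP; split; apply/eqP; by field. Qed.
Lemma Wm_t1 : Wm *m t1 R *m dag Wm = t3 R.
Proof.
rewrite /Wm t1E t3E halfC dag_mk2 !mk2_mul /w0; congr mk2; simpc; apply/eqP; rewrite eq_complex /=;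
  apply/andP; split; apply/eqP; by field.
Qed.
Lemma conjc0' : (conjc (0 : C)) = 0.
Proof. exact: rmorph0. Qed.

Lemma Em_unit y : Em y *m dag (Em y) = 1%:M.
Proof.
rewrite /Em dag_mk2 mk2_mul mk2_1 !exJ opprK conjc0' !mulr0 !mul0r !addr0 !add0r exNK.
by rewrite mulrC exNK.
Qed.
Lemma Em_det y : \det (Em y) = 1.
Proof. by rewrite /Em det_mk2 exNK mulr0 subr0. Qed.

Lemma Em_t1 y : Em y *m t1 R *m Em (2 * y) *m dag (Em y) = t1 R.
Proof.
have h2 : ex (2 * y) = ex y ^+ 2 by rewrite mulr2n mulrDl mul1r exD expr2.
rewrite /Em t1E dag_mk2 !mk2_mul !exJ opprK conjc0' !exN h2 !mulr0 !mul0r !addr0 !add0r.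
have hn := ex_neq0 y.
by congr mk2; field.
Qed.

Lemma Em_pi (s : R) : (s = 1 \/ s = -1) -> Em (s * pi) = - 1%:M.
Proof.
have hp : ex pi = -1 by apply/eqP; rewrite eq_complex /= cospi sinpi oppr0 !eqxx.
have hm : ex (- pi) = -1 by apply/eqP; rewrite eq_complex /= cosN sinN cospi sinpi !oppr0 !eqxx.
rewrite mk2_1 /Em => -[->|->]; rewrite ?mul1r ?mulN1r ?opprK hp hm;
  apply/matrixP => i j; rewrite !mxE; case: (I2 i) => ->; case: (I2 j) => -> //=; by rewrite oppr0.
Qed.
Definition gf (k t : R) : 'M[C]_2 := Wm *m Em (k * t).
Definition Omf (k beta t : R) : 'M[C]_2 := if t == beta then Wm else gf k t.

Lemma gf_E k s : gf k s = mk2 (w0 * ex (k * s)) (w0 * ex ((-k) * s)) (- (conjc w0) * ex (k * s)) ((conjc w0) * ex ((-k) * s)).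
Proof. by rewrite /gf /Wm /Em mk2_mul !mulr0 !addr0 !add0r mulNr !mulNr. Qed.

Lemma conjM (x y : C) : (conjc (x * y)) = (conjc x) * (conjc y).
Proof. by case: x => a b; case: y => c d; simpc. Qed.
Lemma conjN (x : C) : (conjc (- x)) = - (conjc x).
Proof. by case: x => a b; simpc. Qed.

Lemma dag_gf_E k s : dag (gf k s) = mk2 ((conjc w0) * ex ((-k) * s)) (- w0 * ex ((-k) * s)) ((conjc w0) * ex (k * s)) (w0 * ex (k * s)).
Proof.
rewrite gf_E dag_mk2 !conjM !exJ conjN conjcK !mulNr opprK.
by [].
Qed.

Lemma deriv_entry (c : C) (m t : R) :
  T (m * - complex.Im c) (- (m * complex.Re c)) m t +i* T (m * complex.Re c) (- (m * complex.Im c)) m t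
  = 'i * m%:C * (c * ex (m * t)).
Proof. case: c => a b; rewrite /T /ex -complexr0; simpc; rewrite /=; congr (_ +i* _); ring. Qed.

Lemma ReM (x y : C) : complex.Re (x * y) = complex.Re x * complex.Re y - complex.Im x * complex.Im y.
Proof. by case: x => a b; case: y => c d; simpc. Qed.
Lemma ImM (x y : C) : complex.Im (x * y) = complex.Re x * complex.Im y + complex.Im x * complex.Re y.
Proof. by case: x => a b; case: y => c d; simpc. Qed.

Lemma derive_entry_Re (c : C) (m t : R) :
  derive1 (fun s => complex.Re (c * ex (m * s))) t = T (m * - complex.Im c) (- (m * complex.Re c)) m t.
Proof.
have -> : (fun s => complex.Re (c * ex (m * s))) = T (complex.Re c) (- complex.Im c) m.
  by apply/funext => s; rewrite Re_ex.
by rewrite derive1_T.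
Qed.
Lemma derive_entry_Im (c : C) (m t : R) :
  derive1 (fun s => complex.Im (c * ex (m * s))) t = T (m * complex.Re c) (- (m * complex.Im c)) m t.
Proof.
have -> : (fun s => complex.Im (c * ex (m * s))) = T (complex.Im c) (complex.Re c) m.
  by apply/funext => s; rewrite Im_ex.
by rewrite derive1_T.
Qed.

Lemma mx_deriv_ce (F : R -> 'M[C]_2) c0 c1 c2 c3 m0 m1 m2 m3 t :
  (forall s, F s = mk2 (c0 * ex (m0 * s)) (c1 * ex (m1 * s)) (c2 * ex (m2 * s)) (c3 * ex (m3 * s))) ->
  mx_deriv F t = mk2 ('i * m0%:C * (c0 * ex (m0 * t))) ('i * m1%:C * (c1 * ex (m1 * t)))
                     ('i * m2%:C * (c2 * ex (m2 * t))) ('i * m3%:C * (c3 * ex (m3 * t))).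
Proof.
move=> HF; have -> : F = fun s => mk2 (c0 * ex (m0 * s)) (c1 * ex (m1 * s)) (c2 * ex (m2 * s)) (c3 * ex (m3 * s)).
  exact/funext.
rewrite /mx_deriv; apply/matrixP => i j; rewrite mxE.
case: (I2 i) => ->; case: (I2 j) => ->.
- under eq_fun do rewrite mk2_00. under [X in _ +i* derive1 X _]eq_fun do rewrite mk2_00.
  by rewrite derive_entry_Re derive_entry_Im deriv_entry mk2_00.
- under eq_fun do rewrite mk2_01. under [X in _ +i* derive1 X _]eq_fun do rewrite mk2_01.
  by rewrite derive_entry_Re derive_entry_Im deriv_entry mk2_01.
- under eq_fun do rewrite mk2_10. under [X in _ +i* derive1 X _]eq_fun do rewrite mk2_10.
  by rewrite derive_entry_Re derive_entry_Im deriv_entry mk2_10.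
- under eq_fun do rewrite mk2_11. under [X in _ +i* derive1 X _]eq_fun do rewrite mk2_11.
  by rewrite derive_entry_Re derive_entry_Im deriv_entry mk2_11.
Qed.
Lemma mx_deriv_near (F G : R -> 'M[C]_2) t : (\forall s \near t, F s = G s) -> mx_deriv F t = mx_deriv G t.
Proof.
move=> H; apply/matrixP => i j; rewrite !mxE !derive1E.
congr (_ +i* _); apply: near_eq_derive; by apply: filterS H => s ->.
Qed.

Lemma cont_ce_entry (c m : R[i]) (D : set R) x (mm : R) :
  (fun s => complex.Re (c * ex (mm * s))) @ within D (nbhs x) --> complex.Re (c * ex (mm * x)) /\
  (fun s => complex.Im (c * ex (mm * s))) @ within D (nbhs x) --> complex.Im (c * ex (mm * x)).
Proof.
split.
- have -> : (fun s => complex.Re (c * ex (mm * s))) = T (complex.Re c) (- complex.Im c) mm.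
    by apply/funext => s; rewrite Re_ex.
  rewrite Re_ex. apply: cvg_within_filter. exact: cont_T.
- have -> : (fun s => complex.Im (c * ex (mm * s))) = T (complex.Im c) (complex.Re c) mm.
    by apply/funext => s; rewrite Im_ex.
  rewrite Im_ex. apply: cvg_within_filter. exact: cont_T.
Qed.

Lemma cont_ce (F : R -> 'M[C]_2) c0 c1 c2 c3 m0 m1 m2 m3 D x :
  (forall s, F s = mk2 (c0 * ex (m0 * s)) (c1 * ex (m1 * s)) (c2 * ex (m2 * s)) (c3 * ex (m3 * s))) ->
  mx_cont_within D F x.
Proof.
move=> HF; have -> : F = fun s => mk2 (c0 * ex (m0 * s)) (c1 * ex (m1 * s)) (c2 * ex (m2 * s)) (c3 * ex (m3 * s)).
  exact/funext.
move=> i j; case: (I2 i) => ->; case: (I2 j) => ->.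
- under eq_fun do rewrite mk2_00. under [X in _ /\ X @ _ --> _]eq_fun do rewrite mk2_00.
  rewrite mk2_00; exact: cont_ce_entry.
- under eq_fun do rewrite mk2_01. under [X in _ /\ X @ _ --> _]eq_fun do rewrite mk2_01.
  rewrite mk2_01; exact: cont_ce_entry.
- under eq_fun do rewrite mk2_10. under [X in _ /\ X @ _ --> _]eq_fun do rewrite mk2_10.
  rewrite mk2_10; exact: cont_ce_entry.
- under eq_fun do rewrite mk2_11. under [X in _ /\ X @ _ --> _]eq_fun do rewrite mk2_11.
  rewrite mk2_11; exact: cont_ce_entry.
Qed.

Lemma mx_cont_mul D (F G : R -> 'M[C]_2) x :
  mx_cont_within D F x -> mx_cont_within D G x -> mx_cont_within D (fun s => F s *m G s) x.
Proof.
move=> HF HG i j.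
have [F1 F2] := HF i ord0; have [F3 F4] := HF i ord_max.
have [G1 G2] := HG ord0 j; have [G3 G4] := HG ord_max j.
split.
- have -> : (fun s => complex.Re ((F s *m G s) i j)) = fun s =>
     (complex.Re (F s i ord0) * complex.Re (G s ord0 j) - complex.Im (F s i ord0) * complex.Im (G s ord0 j))
   + (complex.Re (F s i ord_max) * complex.Re (G s ord_max j) - complex.Im (F s i ord_max) * complex.Im (G s ord_max j)).
    by apply/funext => s; rewrite mulmx2 ReD !ReM.
  rewrite mulmx2 ReD !ReM.
  apply: cvgD; apply: cvgB; apply: cvgM => //.
- have -> : (fun s => complex.Im ((F s *m G s) i j)) = fun s =>
     (complex.Re (F s i ord0) * complex.Im (G s ord0 j) + complex.Im (F s i ord0) * complex.Re (G s ord0 j))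
   + (complex.Re (F s i ord_max) * complex.Im (G s ord_max j) + complex.Im (F s i ord_max) * complex.Re (G s ord_max j)).
    by apply/funext => s; rewrite mulmx2 ImD !ImM.
  rewrite mulmx2 ImD !ImM.
  apply: cvgD; apply: cvgD; apply: cvgM => //.
Qed.
Lemma smooth_entry (c : C) (m : R) n x :
  derivable (derive1n n (fun s => complex.Re (c * ex (m * s)))) x 1 /\
  derivable (derive1n n (fun s => complex.Im (c * ex (m * s)))) x 1.
Proof.
split.
- have -> : (fun s => complex.Re (c * ex (m * s))) = T (complex.Re c) (- complex.Im c) m.
    by apply/funext => s; rewrite Re_ex.
  have [p' [q' ->]] := derive1n_T n (complex.Re c) (- complex.Im c) m. exact: derivable_T.
- have -> : (fun s => complex.Im (c * ex (m * s))) = T (complex.Im c) (complex.Re c) m.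
    by apply/funext => s; rewrite Im_ex.
  have [p' [q' ->]] := derive1n_T n (complex.Im c) (complex.Re c) m. exact: derivable_T.
Qed.

Lemma smooth_ce (F : R -> 'M[C]_2) c0 c1 c2 c3 m0 m1 m2 m3 :
  (forall s, F s = mk2 (c0 * ex (m0 * s)) (c1 * ex (m1 * s)) (c2 * ex (m2 * s)) (c3 * ex (m3 * s))) ->
  forall (i j : 'I_2) (n : nat) (x : R),
        derivable (derive1n n (fun s => complex.Re (F s i j))) x 1 /\
        derivable (derive1n n (fun s => complex.Im (F s i j))) x 1.
Proof.
move=> HF; have -> : F = fun s => mk2 (c0 * ex (m0 * s)) (c1 * ex (m1 * s)) (c2 * ex (m2 * s)) (c3 * ex (m3 * s)).
  exact/funext.
move=> i j n x; case: (I2 i) => ->; case: (I2 j) => ->.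
- under eq_fun do rewrite mk2_00. under [X in _ /\ derivable (derive1n _ X) _ _]eq_fun do rewrite mk2_00.
  exact: smooth_entry.
- under eq_fun do rewrite mk2_01. under [X in _ /\ derivable (derive1n _ X) _ _]eq_fun do rewrite mk2_01.
  exact: smooth_entry.
- under eq_fun do rewrite mk2_10. under [X in _ /\ derivable (derive1n _ X) _ _]eq_fun do rewrite mk2_10.
  exact: smooth_entry.
- under eq_fun do rewrite mk2_11. under [X in _ /\ derivable (derive1n _ X) _ _]eq_fun do rewrite mk2_11.
  exact: smooth_entry.
Qed.
End A.

Unset Implicit Arguments.
Lemma mk2_scale_i (R : realType) (x0 x1 x2 x3 : R[i]) (m0 m1 m2 m3 : R) :
  'i *: mk2 (m0%:C * x0) (m1%:C * x1) (m2%:C * x2) (m3%:C * x3) =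
  mk2 ('i * m0%:C * x0) ('i * m1%:C * x1) ('i * m2%:C * x2) ('i * m3%:C * x3).
Proof. by rewrite mk2_scale !mulrA. Qed.
Lemma ie_i (R : realType) (e : R) : 'i / e%:C * 'i = - (e%:C)^-1 :> R[i].
Proof. by rewrite mulrAC -expr2 sqr_i mulN1r. Qed.
Lemma key_C (R : realType) (k e : R) : (- (2 * k) / e)%:C = - (2 * k%:C) / e%:C :> R[i].
Proof. by rewrite rmorphM rmorphN rmorphM fmorphV rmorph_nat. Qed.

Theorem proposition7 (R : realType) (e beta v s : R) :
  0 < e -> 0 < beta -> 0 < v -> (s = 1 \/ s = -1) ->
  exists Om : R -> 'M[R[i]]_2,
    (forall t, 0 <= t <= beta -> is_SU2 (Om t)) /\
    Om 0 = Om beta /\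
    exists t0 : R,
      0 <= t0 <= beta /\
      smooth_on (`[0, beta] `\ t0) Om /\
      ~ mx_cont_within `[0, beta] Om t0 /\
      (forall t, 0 <= t <= beta ->
         Om t *m phi_w v beta s t *m dag (Om t) = phi_u v) /\
      (forall (mu : 'I_4) (t : R), 0 < t < beta -> t <> t0 ->
         gauge_transform e Om mu (a_w e beta s mu) t = a_u R mu) /\
      admissible beta Om /\
      polyakov_const e beta (a_w e beta s mu4) = -1%:M /\
      polyakov_const e beta (a_u R mu4) = 1%:M.
Proof.
move=> e0 b0 v0 hs.
set k := s * pi / beta.
have bne : beta != 0 by rewrite gt_eqF.
have ene : e != 0 by rewrite gt_eqF.
have hkb : k * beta = s * pi by rewrite /k; field.
have gb : gf k beta = - Wm R by rewrite /gf hkb Em_pi // mulmxN mulmx1.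
have Em0 : Em (R:=R) 0 = 1%:M by rewrite /Em oppr0 ex0 mk2_1.
have Om0 : Omf k beta 0 = Wm R by rewrite /Omf eq_sym (negbTE bne) /gf mulr0 Em0 mulmx1.
have Omb : Omf k beta beta = Wm R by rewrite /Omf eqxx.
have Omne : forall t, t != beta -> Omf k beta t = gf k t by move=> t /negbTE ht; rewrite /Omf ht.
have quad : forall t X, Omf k beta t *m X *m dag (Omf k beta t) = gf k t *m X *m dag (gf k t).
  move=> t X; case: (eqVneq t beta) => [->|ht]; last by rewrite Omne.
  by rewrite Omb gb dagN !mulNmx !mulmxN opprK.
have E_group : forall y, Wm R *m Em y *m t1 R *m Em (2 * y) *m dag (Em y) = Wm R *m t1 R.
  by move=> y; rewrite -[in RHS](Em_t1 y) !mulmxA.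
exists (Omf k beta).
split.
  move=> t _.
  have gU : gf k t *m dag (gf k t) = 1%:M.
    by rewrite /gf dag_mul mulmxA -(mulmxA (Wm R)) Em_unit mulmx1 Wm_unit.
  split; first by have := quad t 1%:M; rewrite !mulmx1 => ->.
  case: (eqVneq t beta) => [->|ht]; first by rewrite Omb Wm_det.
  by rewrite Omne // /gf det_mulmx Wm_det Em_det mulr1.
split; first by rewrite Om0 Omb.
exists beta; split; first by rewrite lexx ltW.
split.
  exists (gf k), setT; split; first exact: openT.
  split; first done.
  split; first by move=> i j n x _; exact: (smooth_ce (gf_E k)).
  by move=> x [_ hx]; rewrite Omne //; exact/eqP.
split.
  move=> H; have [H1 _] := H ord0 ord0.
  rewrite Omb /Wm mk2_00 /w0 /= in H1.
  pose h := T (2^-1 : R) (- 2^-1) k.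
  have hfe : forall x, x != beta -> complex.Re (Omf k beta x ord0 ord0) = h x.
    by move=> x hx; rewrite Omne // gf_E mk2_00 Re_ex.
  have hbeta : h beta < 0.
    rewrite /h /T hkb; case: hs => ->; rewrite ?mul1r ?mulN1r ?cosN ?sinN cospi sinpi ?oppr0 mulr0 addr0;
    by rewrite mulrN1 oppr_lt0 invr_gt0 ltr0n.
  have hpos : (0 : R) < 2^-1 by rewrite invr_gt0 ltr0n.
  have A1 := @cvgr_gt _ _ _ (within_filter _ (nbhs_filter beta)) _ _ H1 _ hpos.
  have A2 := @cvgr_lt _ _ _ (nbhs_filter beta) _ _ (@cont_T R (2^-1) (- 2^-1) k beta) _ hbeta.
  rewrite near_withinE in A1.
  have [x [[Hf Hh] [Hx0 Hxb]]] : exists x,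
      ((`[0, beta] x -> 0 < complex.Re (Omf k beta x ord0 ord0)) /\ h x < 0) /\ (0 < x /\ x < beta).
    apply: (@filter_ex _ (beta^'-) (at_left_proper_filter beta)).
    near=> x.
    split; split.
    - near: x. exact: (@cvg_within _ _ _ (fun u => u < beta) _ A1).
    - near: x. exact: (@cvg_within _ _ _ (fun u => u < beta) _ A2).
    - near: x. exact: nbhs_left_gt.
    - near: x. exact: nbhs_left_lt.
  have Hin : `[0, beta] x by rewrite /= in_itv /= !ltW.
  have := Hf Hin; rewrite hfe ?lt_eqF // => Hpos.
  by move: (lt_trans Hpos Hh); rewrite ltxx.
split.
  move=> t _; rewrite quad /phi_w expm_t3.
  have -> : s * (4 * pi) / beta * t / 2 = 2 * (k * t) by rewrite /k; field.
  have -> : mk2 (ex (2 * (k * t))) 0 0 (ex (- (2 * (k * t)))) = Em (2 * (k * t)) by [].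
  rewrite /phi_u /gf dag_mul -scalemxAr -scalemxAl !mulmxA E_group Wm_t1.
  done.
split.
  move=> mu t /andP[t0 tb] htb.
  have htb' : t != beta by apply/eqP.
  case: (eqVneq mu mu4) => [->|hmu].
    rewrite /gauge_transform /dmu /a_w eqxx /a_u Omne //.
    have HD : mx_deriv (fun s0 => dag (Omf k beta s0)) t = mx_deriv (fun s0 => dag (gf k s0)) t.
      apply: mx_deriv_near. apply: filterS (lt_nbhsl tb) => s0 hs0. by rewrite Omne // lt_eqF.
    rewrite HD (@mx_deriv_ce _ (fun s0 => dag (gf k s0)) _ _ _ _ _ _ _ _ t (dag_gf_E k)).
    rewrite -[mk2 _ _ _ _]mk2_scale_i -(scalemxAr 'i) (scalerA ('i / e%:C) 'i) ie_i.
    have -> : - s * (2 * pi) / (e * beta) = - (2 * k) / e by rewrite /k; field; rewrite ene bne.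
    rewrite key_C dag_gf_E gf_E t3E !mk2_scale !mk2_mul !mk2_scale mk2_add mk2_0 !oppC !mulNr !exN.
    have hx := ex_neq0 (k * t).
    have hec : e%:C != 0 :> R[i] by rewrite -!complexr0 eq_complex /= eqxx andbT.
    by congr mk2; field; rewrite hx hec.

  rewrite /gauge_transform /dmu /a_w (negbTE hmu) /a_u /=.
  have Z : forall A : 'M[R[i]]_2, A *m (0 : 'M[R[i]]_2) = 0.
    by move=> A; apply/matrixP => i j; rewrite !mxE big1 // => l _; rewrite mxE mulr0.
  by rewrite !Z mul0mx scaler0 addr0.
split.
  move=> da hsu hc hper; split.
    move=> x hx.
    have -> : (fun t => Omf k beta t *m da t *m dag (Omf k beta t)) = fun t => gf k t *m da t *m dag (gf k t).
      by apply/funext => t; rewrite quad.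
    apply: mx_cont_mul; [apply: mx_cont_mul; [apply: cont_ce; exact: gf_E | exact: hc] | apply: cont_ce => s0; exact: dag_gf_E].
  by rewrite Om0 Omb hper.
split.
  rewrite /polyakov_const /a_w eqxx scalerA.
  have -> : ('i * (e * beta)%:C * (- s * (2 * pi) / (e * beta))%:C) = ((((-s) * pi) * 2)%:C * 'i).
    rewrite -mulrA -rmorphM mulrC; congr (_%:C * _); field.
    by rewrite bne ene.
  rewrite expm_t3.
  have -> : (-s * pi * 2) / 2 = (-s) * pi by field.
  apply: (Em_pi (s := -s)).
  by case: hs => ->; [right|left]; rewrite ?opprK.
rewrite /polyakov_const /a_u scaler0.
have -> : (0 : 'M[R[i]]_2) = ((0:R)%:C * 'i) *: t3 R by rewrite rmorph0 mul0r scale0r.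
by rewrite expm_t3 mul0r oppr0 ex0 mk2_1.
Unshelve. all: by end_near.
Qed.
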